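(* Let $a,b,c\in\mathbb{H}^3$, and let $v_a\in T_a\mathbb{H}^3$ and $v_b\in T_b\mathbb{H}^3$ be unit vectors. Let $\mathcal A$ be the hyperbolic area of the geodesic triangle $(a,b,c)$. Then $$\left\|\Gamma_a^bv_a-v_b\right\|_{T_b\mathbb{H}^3}\le\mathcal A+\left\|\Gamma_a^cv_a-\Gamma_b^cv_b\right\|_{T_c\mathbb{H}^3}.$$
   Context: $\Gamma_p^qv\in T_q\mathbb{H}^3$ denotes the parallel transport of $v\in T_p\mathbb{H}^3$ along the geodesic segment of $\mathbb{H}^3$ from $p$ to $q$. *)

(* Defs.v *)
(* Hyperboloid model of H^3 in Minkowski space R^{1,3}. *)
From Stdlib Require Import Reals.
From Coquelicot Require Import Coquelicot.
Open Scope R_scope.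

Record V4 := mkV4 { c0 : R; c1 : R; c2 : R; c3 : R }.

Definition vadd (u w : V4) : V4 :=
  mkV4 (c0 u + c0 w) (c1 u + c1 w) (c2 u + c2 w) (c3 u + c3 w).
Definition vscal (k : R) (u : V4) : V4 :=
  mkV4 (k * c0 u) (k * c1 u) (k * c2 u) (k * c3 u).
Definition vsub (u w : V4) : V4 := vadd u (vscal (-1) w).

Definition mdot (u w : V4) : R :=
  - c0 u * c0 w + c1 u * c1 w + c2 u * c2 w + c3 u * c3 w.

Definition inH3 (p : V4) : Prop := mdot p p = -1 /\ 0 < c0 p.

(* Tangent space T_p H^3 = Minkowski-orthogonal complement of p;
   the Riemannian metric is the restriction of mdot (positive definite there). *)
Definition tangent (p v : V4) : Prop := mdot p v = 0.
Definition tnorm (v : V4) : R := sqrt (mdot v v).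

(* Parallel transport along the geodesic segment from p to q (closed form
   in the hyperboloid model: the boost in span(p,q) fixing its complement). *)
Definition ptransport (p q v : V4) : V4 :=
  vadd v (vscal (mdot q v / (1 - mdot p q)) (vadd p q)).

Definition hnormalize (x : V4) : V4 := vscal (/ sqrt (- mdot x x)) x.

(* Parametrization of the geodesic triangle (a,b,c) over the simplex
   {(s,t) | s,t >= 0, s + t <= 1}: geodesic convex hull in H^3 is the radial
   projection of the Euclidean convex hull of a, b, c. *)
Definition tri_param (a b c : V4) (s t : R) : V4 :=
  hnormalize (vadd (vscal (1 - s - t) a) (vadd (vscal s b) (vscal t c))).

Definition d_s (a b c : V4) (s t : R) : V4 :=
  mkV4 (Derive (fun s' => c0 (tri_param a b c s' t)) s)
       (Derive (fun s' => c1 (tri_param a b c s' t)) s)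
       (Derive (fun s' => c2 (tri_param a b c s' t)) s)
       (Derive (fun s' => c3 (tri_param a b c s' t)) s).

Definition d_t (a b c : V4) (s t : R) : V4 :=
  mkV4 (Derive (fun t' => c0 (tri_param a b c s t')) t)
       (Derive (fun t' => c1 (tri_param a b c s t')) t)
       (Derive (fun t' => c2 (tri_param a b c s t')) t)
       (Derive (fun t' => c3 (tri_param a b c s t')) t).

(* Area element sqrt(det of first fundamental form) w.r.t. the hyperbolic metric. *)
Definition area_density (a b c : V4) (s t : R) : R :=
  let X := d_s a b c s t in
  let Y := d_t a b c s t in
  sqrt (mdot X X * mdot Y Y - (mdot X Y) ^ 2).

Definition tri_area (a b c : V4) : R :=
  RInt (fun s => RInt (fun t => area_density a b c s t) 0 (1 - s)) 0 1.

(* Main.v *)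
Require Import Defs.
From Stdlib Require Import Reals.
From Coquelicot Require Import Coquelicot.
Open Scope R_scope.
From Stdlib Require Import Lra Psatz.
Import Defs.

Lemma V4_eq (u w : V4) : c0 u = c0 w -> c1 u = c1 w -> c2 u = c2 w -> c3 u = c3 w -> u = w.
Proof. destruct u, w; simpl; intros; subst; reflexivity. Qed.

Lemma mdot_sym u w : mdot u w = mdot w u.
Proof. unfold mdot; ring. Qed.

Lemma mdot_add_r u v w : mdot u (vadd v w) = mdot u v + mdot u w.
Proof. unfold mdot, vadd; simpl; ring. Qed.
Lemma mdot_add_l u v w : mdot (vadd v w) u = mdot v u + mdot w u.
Proof. unfold mdot, vadd; simpl; ring. Qed.
Lemma mdot_scal_r u k w : mdot u (vscal k w) = k * mdot u w.
Proof. unfold mdot, vscal; simpl; ring. Qed.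
Lemma mdot_scal_l u k w : mdot (vscal k w) u = k * mdot w u.
Proof. unfold mdot, vscal; simpl; ring. Qed.
Ltac mexp := repeat (rewrite ?mdot_add_r, ?mdot_add_l, ?mdot_scal_r, ?mdot_scal_l).

Lemma tangent_nonneg P U : inH3 P -> mdot P U = 0 -> 0 <= mdot U U.
Proof.
  destruct P as [p0 p1 p2 p3], U as [u0 u1 u2 u3]; unfold inH3, mdot; simpl.
  intros [H1 H2] H3.
  assert (E : p0*p0*(- u0 * u0 + u1 * u1 + u2 * u2 + u3 * u3) =
     (u1*u1+u2*u2+u3*u3) + ((p1*u2-p2*u1)^2 + (p1*u3-p3*u1)^2 + (p2*u3-p3*u2)^2)).
  { assert (p0*u0 = p1*u1+p2*u2+p3*u3) by lra.
    assert (p0*p0 = 1 + p1*p1+p2*p2+p3*p3) by lra.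
    replace (p0*p0*(- u0 * u0 + u1 * u1 + u2 * u2 + u3 * u3)) with
      (p0*p0*(u1 * u1 + u2 * u2 + u3 * u3) - (p0*u0)*(p0*u0)) by ring.
    rewrite H, H0. ring. }
  assert (0 <= p0*p0*(- u0 * u0 + u1 * u1 + u2 * u2 + u3 * u3)) by (rewrite E; repeat apply Rplus_le_le_0_compat; try apply pow2_ge_0; nra).
  assert (0 < p0*p0) by nra.
  nra.
Qed.

Lemma H3_dot_pos a b : inH3 a -> inH3 b -> 0 < - mdot a b.
Proof.
  destruct a as [a0 a1 a2 a3], b as [b0 b1 b2 b3]; unfold inH3, mdot; simpl.
  intros [H1 H2] [H3 H4].
  assert (E: (a0*b0)^2 = (1 + (a1*a1+a2*a2+a3*a3))*(1+(b1*b1+b2*b2+b3*b3))) by nra.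
  assert (L: (a1*a1+a2*a2+a3*a3)*(b1*b1+b2*b2+b3*b3) - (a1*b1+a2*b2+a3*b3)^2
     = (a1*b2-a2*b1)^2 + (a1*b3-a3*b1)^2 + (a2*b3-a3*b2)^2) by ring.
  assert (0 <= (a1*b2-a2*b1)^2 + (a1*b3-a3*b1)^2 + (a2*b3-a3*b2)^2) by (repeat apply Rplus_le_le_0_compat; apply pow2_ge_0).
  assert (0 <= a1*a1+a2*a2+a3*a3) by nra.
  assert (0 <= b1*b1+b2*b2+b3*b3) by nra.
  assert ((a1*b1+a2*b2+a3*b3)^2 < (a0*b0)^2) by (rewrite E; nra).
  assert (0 < a0*b0) by nra.
  nra.
Qed.

Lemma H3_dot_ge1 a b : inH3 a -> inH3 b -> 1 <= - mdot a b.
Proof.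
  intros Ha Hb.
  pose proof (H3_dot_pos a b Ha Hb).
  set (U := vadd b (vscal (mdot a b) a)).
  assert (HU : mdot a U = 0).
  { destruct Ha as [Ha _]. unfold U. mexp. rewrite Ha. ring. }
  pose proof (tangent_nonneg a U Ha HU).
  assert (mdot U U = mdot a b ^2 - 1).
  { destruct Ha as [Ha _], Hb as [Hb _]. unfold U. mexp. rewrite Ha, Hb, (mdot_sym b a). ring. }
  nra.
Qed.

Lemma tangent_CS P U V : inH3 P -> mdot P U = 0 -> mdot P V = 0 ->
  (mdot U V)^2 <= mdot U U * mdot V V.
Proof.
  intros HP HU HV.
  assert (Hl : forall l, 0 <= mdot U U - 2*l*mdot U V + l*l*mdot V V).
  { intros l. set (W := vadd U (vscal (-l) V)).
    assert (mdot P W = 0) by (unfold W; mexp; rewrite HU, HV; ring).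
    pose proof (tangent_nonneg P W HP H).
    replace (mdot U U - 2*l*mdot U V + l*l*mdot V V) with (mdot W W) by (unfold W; mexp; rewrite (mdot_sym V U); ring).
    exact H0. }
  pose proof (tangent_nonneg P V HP HV).
  destruct (Rle_lt_or_eq_dec 0 (mdot V V) H) as [Hp|Hz].
  - specialize (Hl (mdot U V / mdot V V)).
    assert (0 <= mdot U U * mdot V V - (mdot U V)^2).
    { replace (mdot U U * mdot V V - (mdot U V)^2) with
        (mdot V V * (mdot U U - 2*(mdot U V / mdot V V)*mdot U V + (mdot U V / mdot V V)*(mdot U V / mdot V V)*mdot V V)) by (field; lra).
      apply Rmult_le_pos; lra. }
    lra.
  - rewrite <- Hz in Hl |- *.
    destruct (Req_dec (mdot U V) 0) as [E|E].
    + rewrite E; lra.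
    + exfalso. pose proof (Hl ((mdot U U + 1) / (2 * mdot U V))).
      assert (mdot U U - 2 * ((mdot U U + 1) / (2 * mdot U V)) * mdot U V +
        (mdot U U + 1) / (2 * mdot U V) * ((mdot U U + 1) / (2 * mdot U V)) * 0 = -1) by (field; auto).
      lra.
Qed.

Definition det3 (a11 a12 a13 a21 a22 a23 a31 a32 a33 : R) : R :=
  a11*(a22*a33-a23*a32) - a12*(a21*a33-a23*a31) + a13*(a21*a32-a22*a31).

Definition det4 (a11 a12 a13 a14 a21 a22 a23 a24 a31 a32 a33 a34 a41 a42 a43 a44 : R) : R :=
  a11 * det3 a22 a23 a24 a32 a33 a34 a42 a43 a44
  - a12 * det3 a21 a23 a24 a31 a33 a34 a41 a43 a44
  + a13 * det3 a21 a22 a24 a31 a32 a34 a41 a42 a44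
  - a14 * det3 a21 a22 a23 a31 a32 a33 a41 a42 a43.

Lemma cauchy_binet (e1 e2 e3 e4 : V4) :
  det4 (mdot e1 e1) (mdot e1 e2) (mdot e1 e3) (mdot e1 e4)
       (mdot e2 e1) (mdot e2 e2) (mdot e2 e3) (mdot e2 e4)
       (mdot e3 e1) (mdot e3 e2) (mdot e3 e3) (mdot e3 e4)
       (mdot e4 e1) (mdot e4 e2) (mdot e4 e3) (mdot e4 e4)
  = - (det4 (c0 e1) (c1 e1) (c2 e1) (c3 e1) (c0 e2) (c1 e2) (c2 e2) (c3 e2)
            (c0 e3) (c1 e3) (c2 e3) (c3 e3) (c0 e4) (c1 e4) (c2 e4) (c3 e4))^2.
Proof.
  destruct e1, e2, e3, e4; unfold det4, det3, mdot; simpl. ring.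
Qed.

Section Hol.
Variables a b c va vb : V4.
Hypotheses (Ha : inH3 a) (Hb : inH3 b) (Hc : inH3 c)
  (Hta : tangent a va) (Hva : mdot va va = 1) (Htb : tangent b vb) (Hvb : mdot vb vb = 1).

Let p := - mdot a b.
Let q := - mdot b c.
Let r := - mdot a c.
Let x := mdot b va.
Let y := mdot c va.

Ltac canon := rewrite ?(mdot_sym b a), ?(mdot_sym c a), ?(mdot_sym c b),
  ?(mdot_sym va a), ?(mdot_sym va b), ?(mdot_sym va c),
  ?(mdot_sym vb a), ?(mdot_sym vb b), ?(mdot_sym vb c), ?(mdot_sym vb va).

Lemma gram_facts : mdot a a = -1 /\ mdot b b = -1 /\ mdot c c = -1 /\
  mdot a b = - p /\ mdot b c = - q /\ mdot a c = - r /\ mdot a va = 0 /\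
  mdot b va = x /\ mdot c va = y /\ mdot b vb = 0.
Proof.
  destruct Ha, Hb, Hc. unfold tangent in *. unfold p, q, r, x, y.
  repeat split; auto; ring.
Qed.

Lemma p_ge1 : 1 <= p. Proof. apply H3_dot_ge1; auto. Qed.
Lemma q_ge1 : 1 <= q. Proof. apply H3_dot_ge1; auto. Qed.
Lemma r_ge1 : 1 <= r. Proof. apply H3_dot_ge1; auto. Qed.

Ltac gram := unfold vsub, ptransport; mexp; canon;
  destruct gram_facts as (Eaa & Ebb & Ecc & Eab & Ebc & Eac & Eava & Ebva & Ecva & Ebvb);
  rewrite ?Eaa, ?Ebb, ?Ecc, ?Eab, ?Ebc, ?Eac, ?Eava, ?Ebva, ?Ecva, ?Ebvb, ?Hva, ?Hvb.

Definition E1 := vsub (ptransport a b va) (ptransport c b (ptransport a c va)).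
Definition E2 := vsub (ptransport c b (ptransport a c va)) vb.
Definition F := vsub (ptransport a c va) (ptransport b c vb).

Let S := 1 + p + q + r.
Let D := 1 + 2*p*q*r - p^2 - q^2 - r^2.
Let K := (r^2-1)*x^2 - 2*(p*r-q)*x*y + (p^2-1)*y^2.

Lemma D_nonneg : 0 <= D.
Proof.
  set (B' := vadd b (vscal (-p) a)). set (C' := vadd c (vscal (-r) a)).
  assert (HB : mdot a B' = 0) by (unfold B'; gram; ring).
  assert (HC : mdot a C' = 0) by (unfold C'; gram; ring).
  pose proof (tangent_CS a B' C' Ha HB HC).
  assert (E : D = mdot B' B' * mdot C' C' - (mdot B' C')^2) by (unfold B', C', D; gram; ring).
  lra.
Qed.

Lemma E1_norm : mdot E1 E1 = 4 * K / (S^2 + D).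
Proof.
  pose proof p_ge1. pose proof q_ge1. pose proof r_ge1. pose proof D_nonneg.
  unfold E1, K, S, D. gram.
  field. split; [|lra].
  replace ((1 + p + q + r) ^ 2 + (1 + 2 * p * q * r - p ^ 2 - q ^ 2 - r ^ 2)) with
    (2*(1+p)*((1+q)*(1+r))) by ring.
  apply Rgt_not_eq. repeat apply Rmult_lt_0_compat; lra.
Qed.

Lemma K_le_D : K <= D.
Proof.
  pose proof (cauchy_binet a b c va) as CB.
  revert CB; canon; intro CB.
  destruct gram_facts as (Eaa & Ebb & Ecc & Eab & Ebc & Eac & Eava & Ebva & Ecva & Ebvb).
  rewrite ?Eaa, ?Ebb, ?Ecc, ?Eab, ?Ebc, ?Eac, ?Eava, ?Ebva, ?Ecva, ?Ebvb, ?Hva in CB.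
  assert (E : det4 (-1) (- p) (- r) 0 (- p) (-1) (- q) x (- r) (- q) (-1) y 0 x y 1 = K - D)
    by (unfold det4, det3, K, D; ring).
  rewrite E in CB.
  match type of CB with _ = - ?z ^ 2 => assert (0 <= z^2) by apply pow2_ge_0 end.
  lra.
Qed.

Lemma E1_tangent : mdot b E1 = 0.
Proof.
  pose proof p_ge1. pose proof q_ge1. pose proof r_ge1.
  unfold E1. gram. field. lra.
Qed.

Lemma E2_tangent : mdot b E2 = 0.
Proof.
  pose proof p_ge1. pose proof q_ge1. pose proof r_ge1.
  unfold E2. gram. field. lra.
Qed.

Lemma E2_norm : mdot E2 E2 = mdot F F.
Proof.
  pose proof p_ge1. pose proof q_ge1. pose proof r_ge1.
  unfold E2, F. gram. field. lra.
Qed.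

Lemma decomp : vsub (ptransport a b va) vb = vadd E1 E2.
Proof.
  unfold E1, E2, vsub. apply V4_eq; unfold vadd, vscal; simpl; ring.
Qed.
End Hol.

Lemma mdot_path X0 U s : mdot (vadd X0 (vscal s U)) (vadd X0 (vscal s U)) =
  mdot X0 X0 + 2 * s * mdot X0 U + s^2 * mdot U U.
Proof. mexp. rewrite (mdot_sym U X0). ring. Qed.

Lemma deriv_hn (X0 U : V4) (proj : V4 -> R)
  (Padd : forall u w, proj (vadd u w) = proj u + proj w)
  (Pscal : forall k u, proj (vscal k u) = k * proj u) s :
  let X := vadd X0 (vscal s U) in
  0 < - mdot X X ->
  is_derive (fun s' => proj (hnormalize (vadd X0 (vscal s' U)))) s
    (proj U / sqrt (- mdot X X) + proj X * mdot X U /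
        (sqrt (- mdot X X) * sqrt (- mdot X X) * sqrt (- mdot X X))).
Proof.
  intros X HX.
  apply is_derive_ext with (f := fun s' => / sqrt (- (mdot X0 X0 + 2 * s' * mdot X0 U + s'^2 * mdot U U))
     * (proj X0 + s' * proj U)).
  { intros t. unfold hnormalize. rewrite Pscal, Padd, Pscal, mdot_path. reflexivity. }
  unfold X in *. rewrite mdot_path in *. unfold X. rewrite Padd, Pscal.
  replace (mdot (vadd X0 (vscal s U)) U) with (mdot X0 U + s * mdot U U) by (mexp; ring).
  auto_derive; replace (s * (s*1)) with (s^2) by ring.
  - split; [lra|split; [apply Rgt_not_eq, sqrt_lt_R0; lra | exact I]].
  - assert (0 < sqrt (- (mdot X0 X0 + 2 * s * mdot X0 U + s ^ 2 * mdot U U))) by (apply sqrt_lt_R0; lra).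
    set (sq := sqrt (- (mdot X0 X0 + 2 * s * mdot X0 U + s ^ 2 * mdot U U))) in *.
    field. lra.
Qed.

Definition Xv (a b c : V4) s t := vadd (vscal (1-s-t) a) (vadd (vscal s b) (vscal t c)).

Lemma Derive_hn (X0 U : V4) (proj : V4 -> R)
  (Padd : forall u w, proj (vadd u w) = proj u + proj w)
  (Pscal : forall k u, proj (vscal k u) = k * proj u) (g : R -> V4) s :
  (forall s', g s' = vadd X0 (vscal s' U)) ->
  0 < - mdot (g s) (g s) ->
  Derive (fun s' => proj (hnormalize (g s'))) s =
    proj U / sqrt (- mdot (g s) (g s)) + proj (g s) * mdot (g s) U /
        (sqrt (- mdot (g s) (g s)) * sqrt (- mdot (g s) (g s)) * sqrt (- mdot (g s) (g s))).
Proof.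
  intros Hg Hpos.
  rewrite (Derive_ext _ (fun s' => proj (hnormalize (vadd X0 (vscal s' U))))) by (intros; rewrite Hg; reflexivity).
  apply is_derive_unique. rewrite Hg in *. apply deriv_hn; auto.
Qed.

Lemma d_s_eq a b c s t : 0 < - mdot (Xv a b c s t) (Xv a b c s t) ->
  let X := Xv a b c s t in let U := vsub b a in let sq := sqrt (- mdot X X) in
  d_s a b c s t = vadd (vscal (/ sq) U) (vscal (mdot X U / (sq*sq*sq)) X).
Proof.
  intros Hpos X U sq.
  assert (Hg : forall s', Xv a b c s' t = vadd (Xv a b c 0 t) (vscal s' U)).
  { intros s'. unfold Xv, U, vsub. apply V4_eq; unfold vadd, vscal; simpl; ring. }
  unfold d_s.
  change (fun s' => c0 (tri_param a b c s' t)) with (fun s' => c0 (hnormalize (Xv a b c s' t))).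
  change (fun s' => c1 (tri_param a b c s' t)) with (fun s' => c1 (hnormalize (Xv a b c s' t))).
  change (fun s' => c2 (tri_param a b c s' t)) with (fun s' => c2 (hnormalize (Xv a b c s' t))).
  change (fun s' => c3 (tri_param a b c s' t)) with (fun s' => c3 (hnormalize (Xv a b c s' t))).
  rewrite (Derive_hn (Xv a b c 0 t) U c0 ltac:(reflexivity) ltac:(reflexivity) (fun s' => Xv a b c s' t) s Hg Hpos).
  rewrite (Derive_hn (Xv a b c 0 t) U c1 ltac:(reflexivity) ltac:(reflexivity) (fun s' => Xv a b c s' t) s Hg Hpos).
  rewrite (Derive_hn (Xv a b c 0 t) U c2 ltac:(reflexivity) ltac:(reflexivity) (fun s' => Xv a b c s' t) s Hg Hpos).
  rewrite (Derive_hn (Xv a b c 0 t) U c3 ltac:(reflexivity) ltac:(reflexivity) (fun s' => Xv a b c s' t) s Hg Hpos).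
  fold X. fold sq.
  apply V4_eq; unfold vadd, vscal; simpl; field; (apply Rgt_not_eq, sqrt_lt_R0; exact Hpos).
Qed.

Lemma d_t_eq a b c s t : 0 < - mdot (Xv a b c s t) (Xv a b c s t) ->
  let X := Xv a b c s t in let V := vsub c a in let sq := sqrt (- mdot X X) in
  d_t a b c s t = vadd (vscal (/ sq) V) (vscal (mdot X V / (sq*sq*sq)) X).
Proof.
  intros Hpos X V sq.
  assert (Hg : forall t', Xv a b c s t' = vadd (Xv a b c s 0) (vscal t' V)).
  { intros t'. unfold Xv, V, vsub. apply V4_eq; unfold vadd, vscal; simpl; ring. }
  unfold d_t.
  change (fun t' => c0 (tri_param a b c s t')) with (fun t' => c0 (hnormalize (Xv a b c s t'))).
  change (fun t' => c1 (tri_param a b c s t')) with (fun t' => c1 (hnormalize (Xv a b c s t'))).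
  change (fun t' => c2 (tri_param a b c s t')) with (fun t' => c2 (hnormalize (Xv a b c s t'))).
  change (fun t' => c3 (tri_param a b c s t')) with (fun t' => c3 (hnormalize (Xv a b c s t'))).
  rewrite (Derive_hn (Xv a b c s 0) V c0 ltac:(reflexivity) ltac:(reflexivity) (fun t' => Xv a b c s t') t Hg Hpos).
  rewrite (Derive_hn (Xv a b c s 0) V c1 ltac:(reflexivity) ltac:(reflexivity) (fun t' => Xv a b c s t') t Hg Hpos).
  rewrite (Derive_hn (Xv a b c s 0) V c2 ltac:(reflexivity) ltac:(reflexivity) (fun t' => Xv a b c s t') t Hg Hpos).
  rewrite (Derive_hn (Xv a b c s 0) V c3 ltac:(reflexivity) ltac:(reflexivity) (fun t' => Xv a b c s t') t Hg Hpos).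
  fold X. fold sq.
  apply V4_eq; unfold vadd, vscal; simpl; field; (apply Rgt_not_eq, sqrt_lt_R0; exact Hpos).
Qed.

Definition Qst p q r s t := (1-s-t)^2 + s^2 + t^2 + 2*p*(1-s-t)*s + 2*r*(1-s-t)*t + 2*q*s*t.
Definition Dpqr p q r := 1 + 2*p*q*r - p^2 - q^2 - r^2.

Section Dens.
Variables a b c : V4.
Hypotheses (Ha : inH3 a) (Hb : inH3 b) (Hc : inH3 c).
Let p := - mdot a b.
Let q := - mdot b c.
Let r := - mdot a c.

Ltac canon3 := rewrite ?(mdot_sym b a), ?(mdot_sym c a), ?(mdot_sym c b).
Lemma gram3 : mdot a a = -1 /\ mdot b b = -1 /\ mdot c c = -1 /\
  mdot a b = - p /\ mdot b c = - q /\ mdot a c = - r.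
Proof. destruct Ha, Hb, Hc. unfold p, q, r. repeat split; auto; ring. Qed.
Ltac gram3 := mexp; canon3;
  destruct gram3 as (Eaa & Ebb & Ecc & Eab & Ebc & Eac);
  rewrite ?Eaa, ?Ebb, ?Ecc, ?Eab, ?Ebc, ?Eac.

Lemma Q_eq s t : - mdot (Xv a b c s t) (Xv a b c s t) = Qst p q r s t.
Proof. unfold Xv, Qst. gram3. ring. Qed.

Lemma density_eq s t : 0 < Qst p q r s t ->
  area_density a b c s t = sqrt (Dpqr p q r) /
     (sqrt (Qst p q r s t) * sqrt (Qst p q r s t) * sqrt (Qst p q r s t)).
Proof.
  intros HQ. rewrite <- Q_eq in *.
  unfold area_density. rewrite d_s_eq, d_t_eq by exact HQ.
  set (X := Xv a b c s t). set (U := vsub b a). set (V := vsub c a).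
  fold X in HQ.
  assert (Hsq : 0 < sqrt (- mdot X X)) by (apply sqrt_lt_R0; exact HQ).
  assert (HXX : mdot X X = - (sqrt (- mdot X X) * sqrt (- mdot X X))) by (rewrite sqrt_sqrt; lra).
  set (sq := sqrt (- mdot X X)) in *.
  assert (G : - det3 (mdot X X) (mdot X U) (mdot X V) (mdot X U) (mdot U U) (mdot U V)
                     (mdot X V) (mdot U V) (mdot V V) = Dpqr p q r).
  { unfold X, U, V, Xv, vsub, det3, Dpqr. gram3. ring. }
  cbv zeta.
  assert (E : mdot (vadd (vscal (/ sq) U) (vscal (mdot X U / (sq * sq * sq)) X))
                   (vadd (vscal (/ sq) U) (vscal (mdot X U / (sq * sq * sq)) X)) *
              mdot (vadd (vscal (/ sq) V) (vscal (mdot X V / (sq * sq * sq)) X))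
                   (vadd (vscal (/ sq) V) (vscal (mdot X V / (sq * sq * sq)) X)) -
              mdot (vadd (vscal (/ sq) U) (vscal (mdot X U / (sq * sq * sq)) X))
                   (vadd (vscal (/ sq) V) (vscal (mdot X V / (sq * sq * sq)) X)) ^ 2 =
   (- det3 (mdot X X) (mdot X U) (mdot X V) (mdot X U) (mdot U U) (mdot U V)
                     (mdot X V) (mdot U V) (mdot V V)) / ((sq*sq*sq)*(sq*sq*sq))).
  { mexp.
    rewrite ?(mdot_sym U X), ?(mdot_sym V X), ?(mdot_sym V U).
    rewrite HXX. unfold det3. field. lra. }
  rewrite E, G. rewrite sqrt_div_alt by (apply Rmult_lt_0_compat; apply Rmult_lt_0_compat; try apply Rmult_lt_0_compat; lra).
  rewrite sqrt_square; [reflexivity|].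
  apply Rlt_le; repeat apply Rmult_lt_0_compat; lra.
Qed.
End Dens.

Lemma antider (al be ga w t : R) : 0 < al*t^2 + be*t + ga -> 4*al*ga - be^2 <> 0 ->
  is_derive (fun t => 2*w*(2*al*t+be)/((4*al*ga - be^2)*sqrt (al*t^2+be*t+ga))) t
    (w / (sqrt (al*t^2+be*t+ga) * sqrt (al*t^2+be*t+ga) * sqrt (al*t^2+be*t+ga))).
Proof.
  intros HQ HD.
  auto_derive.
  { split; [ | split; [|exact I]]. replace (al * (t * (t * 1)) + be * t + ga) with (al*t^2+be*t+ga) by ring; lra.
    apply Rmult_integral_contrapositive_currified; auto.
    replace (al * (t * (t * 1)) + be * t + ga) with (al*t^2+be*t+ga) by ring.
    apply Rgt_not_eq, sqrt_lt_R0; lra. }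
  replace (al * (t * (t * 1)) + be * t + ga) with (al*t^2+be*t+ga) by ring.
  assert (Hs : 0 < sqrt (al*t^2+be*t+ga)) by (apply sqrt_lt_R0; lra).
  assert (Hs2 : sqrt (al*t^2+be*t+ga) * sqrt (al*t^2+be*t+ga) = al*t^2+be*t+ga) by (apply sqrt_sqrt; lra).
  set (sq := sqrt (al*t^2+be*t+ga)) in *. clearbody sq.
  assert (Hg : ga = sq*sq - al*t^2 - be*t) by lra.
  subst ga.
  field. split; [lra|]. intro Hc; apply HD; rewrite <- Hc; ring.
Qed.

Definition Q0 p s := (1-s)^2 + s^2 + 2*p*(1-s)*s.
Definition Q1 q s := s^2 + (1-s)^2 + 2*q*s*(1-s).
Definition Mf p q r s := (1-s)*s*p + (1-s)^2*r + s^2 + s*(1-s)*q.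
Definition Den p q r s := sqrt (Q0 p s) * sqrt (Q1 q s) + sqrt (Q1 q s) * ((1-s)*p+s)
   + sqrt (Q0 p s) * (s+(1-s)*q) + Mf p q r s.
Definition th p q r w s := 2 * atan ((1-s)^2*w / Den p q r s).
Definition dQ0 p s := -2*(1-s) + 2*s + 2*p*(1-2*s).
Definition dQ1 q s := 2*s - 2*(1-s) + 2*q*(1-2*s).
Definition dMf p q r s := (1-2*s)*p - 2*(1-s)*r + 2*s + (1-2*s)*q.
Definition dDen p q r s :=
  dQ0 p s / (2 * sqrt (Q0 p s)) * sqrt (Q1 q s) + sqrt (Q0 p s) * (dQ1 q s / (2 * sqrt (Q1 q s)))
  + dQ1 q s / (2 * sqrt (Q1 q s)) * ((1-s)*p+s) + sqrt (Q1 q s) * (1 - p)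
  + dQ0 p s / (2 * sqrt (Q0 p s)) * (s+(1-s)*q) + sqrt (Q0 p s) * (1 - q)
  + dMf p q r s.
Definition dth p q r w s :=
  2 * ((-2*(1-s)*w) * Den p q r s - (1-s)^2*w * dDen p q r s) /
   (Den p q r s ^2 + (1-s)^4 * (w*w)).

Definition al r := 2 - 2*r.
Definition be p q r s := -2*(1-s) - 2*p*s + 2*r*(1-s) + 2*q*s.
Definition Dl p q r s := 4 * al r * Q0 p s - (be p q r s)^2.
Definition Fa p q r w s t :=
  2*w*(2*al r*t+be p q r s)/(Dl p q r s * sqrt (al r*t^2+be p q r s*t+Q0 p s)).
Definition gg p q r w s := Fa p q r w s (1-s) - Fa p q r w s 0.

Lemma key_identity p q r w s : 0 < s < 1 -> w*w = Dpqr p q r ->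
  0 < Q0 p s -> 0 < Q1 q s -> Den p q r s ^2 + (1-s)^4 * Dpqr p q r <> 0 -> Dl p q r s <> 0 ->
  - dth p q r w s = gg p q r w s.
Proof.
  intros Hs Hw H0 H1 HDen HDl.
  assert (E1 : al r * (1-s)^2 + be p q r s * (1-s) + Q0 p s = Q1 q s) by (unfold al, be, Q0, Q1; ring).
  assert (E0 : al r * 0^2 + be p q r s * 0 + Q0 p s = Q0 p s) by ring.
  unfold gg, Fa. rewrite E1, E0.
  unfold dth, dDen, Den in *. rewrite Hw.
  assert (Hu : sqrt (Q0 p s) * sqrt (Q0 p s) = Q0 p s) by (apply sqrt_sqrt; lra).
  assert (Hv : sqrt (Q1 q s) * sqrt (Q1 q s) = Q1 q s) by (apply sqrt_sqrt; lra).
  assert (0 < sqrt (Q0 p s)) by (apply sqrt_lt_R0; lra).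
  assert (0 < sqrt (Q1 q s)) by (apply sqrt_lt_R0; lra).
  set (u := sqrt (Q0 p s)) in *. set (v := sqrt (Q1 q s)) in *.
  clearbody u v.
  assert (Hp : p = (u*u - (1-s)^2 - s^2) / (2*(1-s)*s)) by (rewrite Hu; unfold Q0; field; lra).
  assert (Hq : q = (v*v - (1-s)^2 - s^2) / (2*(1-s)*s)) by (rewrite Hv; unfold Q1; field; lra).
  unfold Dl, Dpqr, al, be, Q0, Q1, Mf, dQ0, dQ1, dMf in *.
  subst p q.
  field.
  repeat split; try lra.
  - intro Hc; apply HDl; apply (Rmult_eq_reg_r ((1-s)^2)); [rewrite Rmult_0_l, <- Hc; field; lra | apply pow_nonzero; lra].
  - intro Hc; apply HDen; apply (Rmult_eq_reg_r (64*s^2)); [rewrite Rmult_0_l, <- Hc; field; lra | apply Rmult_integral_contrapositive_currified; [lra|apply pow_nonzero; lra]].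
Qed.

Lemma th_derive p q r w s : 0 < Q0 p s -> 0 < Q1 q s -> 0 < Den p q r s ->
  is_derive (th p q r w) s (dth p q r w s).
Proof.
  intros H0 H1 HD.
  unfold th, dth, dDen, Den, Q0, Q1, Mf, dQ0, dQ1, dMf in *.
  auto_derive;
  replace ((1 + - s) * ((1 + - s) * 1) + s * (s * 1) + 2 * p * (1 + - s) * s) with ((1-s)^2 + s^2 + 2*p*(1-s)*s) by ring;
  replace (s * (s * 1) + (1 + - s) * ((1 + - s) * 1) + 2 * q * s * (1 + - s)) with (s^2 + (1-s)^2 + 2*q*s*(1-s)) by ring.
  1: { repeat split; try lra. }
  - assert (0 < sqrt ((1-s)^2 + s^2 + 2*p*(1-s)*s)) by (apply sqrt_lt_R0; lra).
    assert (0 < sqrt (s^2 + (1-s)^2 + 2*q*s*(1-s))) by (apply sqrt_lt_R0; lra).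
    set (u := sqrt ((1-s)^2 + s^2 + 2*p*(1-s)*s)) in *.
    set (v := sqrt (s^2 + (1-s)^2 + 2*q*s*(1-s))) in *.
    set (DD := u * v + v * ((1 - s) * p + s) + u * (s + (1 - s) * q) +
      ((1 - s) * s * p + (1 - s) ^ 2 * r + s ^ 2 + s * (1 - s) * q)) in *.
    assert (DDe : u * v + v * ((1 + - s) * p + s) + u * (s + (1 + - s) * q) +
      ((1 + - s) * s * p + (1 + - s) * ((1 + - s) * 1) * r + s * (s * 1) + s * (1 + - s) * q) = DD) by (unfold DD; ring).
    rewrite DDe. clearbody u v DD.
    field. repeat split; try lra.
    assert (0 < DD^2) by (apply pow_lt; lra).
    assert (0 <= (1-s)^4) by (replace ((1-s)^4) with (((1-s)^2)^2) by ring; apply pow2_ge_0).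
    assert (0 <= w*w) by apply Rle_0_sqr.
    assert (0 <= (1-s)^4 * (w*w)) by (apply Rmult_le_pos; auto).
    lra.
Qed.

Lemma dth_cont p q r w s : 0 < Q0 p s -> 0 < Q1 q s -> 0 < Den p q r s ->
  continuous (dth p q r w) s.
Proof.
  intros H0 H1 HD.
  apply (@ex_derive_continuous R_AbsRing R_NormedModule).
  unfold dth, dDen, Den, Q0, Q1, Mf, dQ0, dQ1, dMf in *.
  auto_derive;
  replace ((1 + - s) * ((1 + - s) * 1) + s * (s * 1) + 2 * p * (1 + - s) * s) with ((1-s)^2 + s^2 + 2*p*(1-s)*s) by ring;
  replace (s * (s * 1) + (1 + - s) * ((1 + - s) * 1) + 2 * q * s * (1 + - s)) with (s^2 + (1-s)^2 + 2*q*s*(1-s)) by ring.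
  assert (0 < sqrt ((1-s)^2 + s^2 + 2*p*(1-s)*s)) by (apply sqrt_lt_R0; lra).
  assert (0 < sqrt (s^2 + (1-s)^2 + 2*q*s*(1-s))) by (apply sqrt_lt_R0; lra).
  set (u := sqrt ((1-s)^2 + s^2 + 2*p*(1-s)*s)) in *.
  set (v := sqrt (s^2 + (1-s)^2 + 2*q*s*(1-s))) in *.
  assert (HDD : 0 < u * v + v * ((1 + - s) * p + s) + u * (s + (1 + - s) * q) +
      ((1 + - s) * s * p + (1 + - s) * ((1 + - s) * 1) * r + s * (s * 1) + s * (1 + - s) * q)) by lra.
  assert (0 <= (1 + - s) * ((1 + - s) * ((1 + - s) * ((1 + - s) * 1))) * (w * w)).
  { apply Rmult_le_pos; [|apply Rle_0_sqr].
    replace ((1 + - s) * ((1 + - s) * ((1 + - s) * ((1 + - s) * 1)))) with (((1-s)^2)^2) by ring.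
    apply pow2_ge_0. }
  set (DD := u * v + v * ((1 + - s) * p + s) + u * (s + (1 + - s) * q) +
      ((1 + - s) * s * p + (1 + - s) * ((1 + - s) * 1) * r + s * (s * 1) + s * (1 + - s) * q)) in *.
  clearbody u v DD.
  repeat split; try lra.
  assert (0 < DD * (DD * 1)) by nra. lra.
Qed.

Section R3.
Variables p q r : R.
Hypotheses (Hp : 1 <= p) (Hq : 1 <= q) (Hr : 1 <= r).

Lemma Qst_pos s t : 0 <= s -> 0 <= t -> s + t <= 1 -> 1 <= Qst p q r s t.
Proof.
  intros. unfold Qst.
  assert (0 <= (p-1)*((1-s-t)*s)) by (apply Rmult_le_pos; nra).
  assert (0 <= (r-1)*((1-s-t)*t)) by (apply Rmult_le_pos; nra).
  assert (0 <= (q-1)*(s*t)) by (apply Rmult_le_pos; nra).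
  nra.
Qed.

Lemma Q0_pos s : 0 <= s <= 1 -> 0 < Q0 p s.
Proof. intros. unfold Q0. assert (0 <= p*(1-s)*s) by (apply Rmult_le_pos; nra). nra. Qed.
Lemma Q1_pos s : 0 <= s <= 1 -> 0 < Q1 q s.
Proof. intros. unfold Q1. assert (0 <= q*s*(1-s)) by (apply Rmult_le_pos; nra). nra. Qed.

Lemma Den_pos s : 0 <= s <= 1 -> 0 < Den p q r s.
Proof.
  intros Hs. pose proof (Q0_pos s Hs). pose proof (Q1_pos s Hs).
  unfold Den, Mf.
  assert (0 < sqrt (Q0 p s)) by (apply sqrt_lt_R0; lra).
  assert (0 < sqrt (Q1 q s)) by (apply sqrt_lt_R0; lra).
  assert (0 < sqrt (Q0 p s) * sqrt (Q1 q s)) by nra.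
  assert (0 <= sqrt (Q1 q s) * ((1 - s) * p + s)) by (apply Rmult_le_pos; nra).
  assert (0 <= sqrt (Q0 p s) * (s + (1 - s) * q)) by (apply Rmult_le_pos; nra).
  assert (0 <= (1-s)*s*p) by (apply Rmult_le_pos; nra).
  assert (0 <= s*(1-s)*q) by (apply Rmult_le_pos; nra).
  assert (0 <= (1-s)^2*r) by (apply Rmult_le_pos; nra).
  nra.
Qed.

Lemma Dl_neq s : 0 <= s < 1 -> 0 < Dpqr p q r -> Dl p q r s <> 0.
Proof.
  intros Hs HD.
  pose proof (Q0_pos s ltac:(lra)).
  assert (E : Q0 p s * (1-s)^2 * Dpqr p q r = (Dl p q r s / 4) * (Q0 p s - ((1-s)*p + s)^2)
     - (- Q0 p s * (p - q) + ((1-s)*p + s) * ((1-s)*(1-r) + s*(p-q)))^2)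
    by (unfold Dl, al, be, Dpqr, Q0; field).
  assert (E2 : Q0 p s - ((1-s)*p + s)^2 = - (1-s)^2 * (p^2 - 1)) by (unfold Q0; ring).
  assert (0 <= (1-s)^2 * (p^2-1)) by (apply Rmult_le_pos; [apply pow2_ge_0|nra]).
  intro Hc. rewrite Hc in E.
  assert (0 < Q0 p s * (1-s)^2 * Dpqr p q r) by (apply Rmult_lt_0_compat; [apply Rmult_lt_0_compat; [lra| apply pow_lt; lra]| lra]).
  rewrite E2 in E.
  match type of E with _ = _ - ?Z^2 => assert (0 <= Z^2) by apply pow2_ge_0 end.
  lra.
Qed.

Lemma inner_integral w s : 0 < s < 1 -> 0 < Dpqr p q r ->
  is_RInt (fun t => w / (sqrt (Qst p q r s t) * sqrt (Qst p q r s t) * sqrt (Qst p q r s t))) 0 (1-s)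
     (gg p q r w s).
Proof.
  intros Hs HD.
  assert (EQ : forall t, Qst p q r s t = al r * t^2 + be p q r s * t + Q0 p s)
    by (intros; unfold Qst, al, be, Q0; ring).
  assert (Hmin : Rmin 0 (1-s) = 0) by (apply Rmin_left; lra).
  assert (Hmax : Rmax 0 (1-s) = 1-s) by (apply Rmax_right; lra).
  assert (HF := is_RInt_derive (Fa p q r w s)
     (fun t => w / (sqrt (Qst p q r s t) * sqrt (Qst p q r s t) * sqrt (Qst p q r s t))) 0 (1-s)).
  unfold gg. 
  replace (Fa p q r w s (1 - s) - Fa p q r w s 0) with (minus (Fa p q r w s (1 - s)) (Fa p q r w s 0)) by reflexivity.
  apply HF; rewrite Hmin, Hmax; intros t Ht.
  - rewrite EQ. unfold Fa. apply antider.
    + rewrite <- EQ. pose proof (Qst_pos s t ltac:(lra) ltac:(lra) ltac:(lra)). lra.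
    + apply Dl_neq; auto; lra.
  - pose proof (Qst_pos s t ltac:(lra) ltac:(lra) ltac:(lra)).
    apply (@ex_derive_continuous R_AbsRing R_NormedModule).
    unfold Qst in *. auto_derive.
    replace ((1 - s + - t) * ((1 - s + - t) * 1) + s * (s * 1) + t * (t * 1) +
      2 * p * (1 - s + - t) * s + 2 * r * (1 - s + - t) * t + 2 * q * s * t) with
      ((1 - s - t) ^ 2 + s ^ 2 + t ^ 2 + 2 * p * (1 - s - t) * s + 2 * r * (1 - s - t) * t + 2 * q * s * t) by ring.
    assert (0 < sqrt ((1 - s - t) ^ 2 + s ^ 2 + t ^ 2 + 2 * p * (1 - s - t) * s + 2 * r * (1 - s - t) * t + 2 * q * s * t))
      by (apply sqrt_lt_R0; lra).
    repeat split; try lra.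
    apply Rgt_not_eq. repeat apply Rmult_lt_0_compat; lra.
Qed.

Lemma outer_integral : 0 <= Dpqr p q r ->
  RInt (fun s => RInt (fun t => sqrt (Dpqr p q r) /
     (sqrt (Qst p q r s t) * sqrt (Qst p q r s t) * sqrt (Qst p q r s t))) 0 (1-s)) 0 1
  = th p q r (sqrt (Dpqr p q r)) 0.
Proof.
  intros HD0.
  set (w := sqrt (Dpqr p q r)).
  assert (Hw : w * w = Dpqr p q r) by (apply sqrt_sqrt; auto).
  assert (Hw0 : 0 <= w) by apply sqrt_pos.
  rewrite (RInt_ext _ (fun s => - dth p q r w s)).
  2: { intros s Hs. rewrite Rmin_left in Hs by lra. rewrite Rmax_right in Hs by lra.
    destruct (Rle_lt_or_eq_dec 0 (Dpqr p q r) HD0) as [HDp|HDz].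
    - rewrite (is_RInt_unique _ _ _ _ (inner_integral w s Hs HDp)).
      symmetry. apply key_identity; auto.
      + apply Q0_pos; lra.
      + apply Q1_pos; lra.
      + pose proof (Den_pos s ltac:(lra)).
        assert (0 < Den p q r s ^ 2) by (apply pow_lt; lra).
        assert (0 <= (1-s)^4) by (replace ((1-s)^4) with (((1-s)^2)^2) by ring; apply pow2_ge_0).
        assert (0 <= (1-s)^4 * Dpqr p q r) by (apply Rmult_le_pos; lra).
        lra.
      + apply Dl_neq; auto; lra.
    - assert (Hw00 : w = 0) by (unfold w; rewrite <- HDz; apply sqrt_0).
      rewrite Hw00.
      rewrite (RInt_ext _ (fun _ => 0)).
      2: { intros t _. unfold Rdiv. apply Rmult_0_l. }
      rewrite RInt_const. unfold dth, Rdiv. unfold scal; simpl; unfold mult; simpl. ring. }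
  apply is_RInt_unique.
  assert (Hth : is_RInt (dth p q r w) 0 1 (minus (th p q r w 1) (th p q r w 0))).
  { apply (@is_RInt_derive R_CompleteNormedModule); rewrite Rmin_left, Rmax_right by lra; intros s Hs.
    - apply th_derive; [apply Q0_pos|apply Q1_pos|apply Den_pos]; lra.
    - apply dth_cont; [apply Q0_pos|apply Q1_pos|apply Den_pos]; lra. }
  assert (E : th p q r w 0 = opp (minus (th p q r w 1) (th p q r w 0))).
  { assert (th p q r w 1 = 0).
    { unfold th. replace ((1 - 1) ^ 2 * w / Den p q r 1) with 0 by (unfold Rdiv; ring).
      rewrite atan_0. ring. }
    rewrite H. unfold minus, opp, plus; simpl. ring. }
  rewrite E at 1.
  apply (@is_RInt_opp R_CompleteNormedModule). exact Hth.
Qed.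
End R3.

Lemma tnorm_tri P U V : inH3 P -> mdot P U = 0 -> mdot P V = 0 ->
  tnorm (vadd U V) <= tnorm U + tnorm V.
Proof.
  intros HP HU HV.
  pose proof (tangent_CS P U V HP HU HV) as CS.
  pose proof (tangent_nonneg P U HP HU). pose proof (tangent_nonneg P V HP HV).
  unfold tnorm.
  assert (HUV : mdot (vadd U V) (vadd U V) = mdot U U + 2 * mdot U V + mdot V V)
    by (mexp; rewrite (mdot_sym V U); ring).
  rewrite HUV.
  assert (Hsu := sqrt_sqrt _ H). assert (Hsv := sqrt_sqrt _ H0).
  assert (0 <= sqrt (mdot U U)) by apply sqrt_pos.
  assert (0 <= sqrt (mdot V V)) by apply sqrt_pos.
  assert (mdot U V <= sqrt (mdot U U) * sqrt (mdot V V)).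
  { destruct (Rle_or_lt (mdot U V) 0); [nra|].
    apply Rsqr_incr_0_var; [|nra]. unfold Rsqr.
    replace (sqrt (mdot U U) * sqrt (mdot V V) * (sqrt (mdot U U) * sqrt (mdot V V))) with
      (sqrt (mdot U U) * sqrt (mdot U U) * (sqrt (mdot V V) * sqrt (mdot V V))) by ring.
    rewrite Hsu, Hsv. nra. }
  rewrite <- (sqrt_square (sqrt (mdot U U) + sqrt (mdot V V))) by lra.
  apply sqrt_le_1_alt. nra.
Qed.

Lemma atan_sq t : 0 <= t -> 4 * (t^2 / (1 + t^2)) <= (2 * atan t)^2.
Proof.
  intros Ht. destruct (Rle_lt_or_eq_dec 0 t Ht) as [Hp|Hz].
  - assert (Hx : 0 < atan t) by (rewrite <- atan_0; apply atan_increasing; lra).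
    pose proof (sin_lt_x _ Hx).
    rewrite sin_atan in H.
    assert (0 < sqrt (1 + t²)) by (apply sqrt_lt_R0; unfold Rsqr; nra).
    assert (0 < t / sqrt (1 + t²)) by (apply Rdiv_lt_0_compat; lra).
    assert (E : t^2 / (1 + t^2) = (t / sqrt (1 + t²))^2).
    { unfold Rdiv. rewrite Rpow_mult_distr, pow_inv. 
      replace (sqrt (1 + t²) ^ 2) with (1 + t^2). reflexivity.
      rewrite <- (Rsqr_pow2 (sqrt (1 + t²))), Rsqr_sqrt; unfold Rsqr; [ring|nra]. }
    rewrite E. nra.
  - subst. rewrite atan_0. unfold Rdiv. nra.
Qed.

Theorem lemma4 (a b c va vb : V4) :
  inH3 a -> inH3 b -> inH3 c ->
  tangent a va -> mdot va va = 1 ->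
  tangent b vb -> mdot vb vb = 1 ->
  tnorm (vsub (ptransport a b va) vb)
    <= tri_area a b c
       + tnorm (vsub (ptransport a c va) (ptransport b c vb)).
Proof.
  intros Ha Hb Hc Hta Hva Htb Hvb.
  pose proof (p_ge1 a b Ha Hb) as Hp.
  pose proof (q_ge1 b c Hb Hc) as Hq.
  pose proof (r_ge1 a c Ha Hc) as Hr.
  pose proof (D_nonneg a b c va vb Ha Hb Hc Hta Htb) as HD.
  pose proof (K_le_D a b c va vb Ha Hb Hc Hta Hva Htb) as HK.
  pose proof (E1_norm a b c va vb Ha Hb Hc Hta Hva Htb) as HE1.
  set (p := - mdot a b) in *. set (q := - mdot b c) in *. set (r := - mdot a c) in *.
  assert (Harea : tri_area a b c = th p q r (sqrt (Dpqr p q r)) 0).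
  { unfold tri_area.
    rewrite <- (outer_integral p q r Hp Hq Hr) by (unfold Dpqr; exact HD).
    apply RInt_ext. intros s Hs. rewrite Rmin_left in Hs by lra. rewrite Rmax_right in Hs by lra.
    apply RInt_ext. intros t Ht. rewrite Rmin_left in Ht by lra. rewrite Rmax_right in Ht by lra.
    apply density_eq; auto.
    pose proof (Qst_pos p q r Hp Hq Hr s t ltac:(lra) ltac:(lra) ltac:(lra)). apply Rlt_le_trans with 1; [lra| exact H]. }
  assert (Hth : th p q r (sqrt (Dpqr p q r)) 0 = 2 * atan (sqrt (Dpqr p q r) / (1 + p + q + r))).
  { unfold th, Den, Q0, Q1, Mf.
    replace ((1 - 0) ^ 2 + 0 ^ 2 + 2 * p * (1 - 0) * 0) with 1 by ring.
    replace (0 ^ 2 + (1 - 0) ^ 2 + 2 * q * 0 * (1 - 0)) with 1 by ring.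
    rewrite sqrt_1. f_equal. f_equal. field_simplify; [reflexivity|lra|lra]. }
  rewrite Harea, Hth.
  set (w := sqrt (Dpqr p q r)).
  assert (Hw : w * w = Dpqr p q r) by (apply sqrt_sqrt; unfold Dpqr; lra).
  assert (Hw0 : 0 <= w) by apply sqrt_pos.
  set (S := 1 + p + q + r).
  assert (HS : 0 < S) by (unfold S; lra).
  set (A := 2 * atan (w / S)).
  assert (HA : 0 <= A).
  { unfold A. assert (0 <= atan (w/S)).
    { destruct (Rle_lt_or_eq_dec 0 (w/S)) as [Hl|He].
      - apply Rle_div_r; lra.
      - left. rewrite <- atan_0. apply atan_increasing. exact Hl.
      - rewrite <- He, atan_0. lra. }
    lra. }
  assert (HA2 : mdot (E1 a b c va) (E1 a b c va) <= A^2).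
  { rewrite HE1. unfold A.
    eapply Rle_trans; [|apply atan_sq; apply Rle_div_r; lra].
    replace (4 * ((w / S) ^ 2 / (1 + (w / S) ^ 2))) with (4 * (w*w) / (S^2 + w*w)) by (field; nra).
    rewrite Hw. unfold Dpqr.
    assert (0 < S^2 + (1 + 2 * p * q * r - p ^ 2 - q ^ 2 - r ^ 2)) by (unfold S; nra).
    apply Rmult_le_compat_r; [apply Rlt_le, Rinv_0_lt_compat; unfold S in *; lra|].
    lra. }
  assert (HtE1 : tnorm (E1 a b c va) <= A).
  { unfold tnorm. rewrite <- (sqrt_square A) by lra. apply sqrt_le_1_alt. nra. }
  rewrite (decomp a b c va vb).
  eapply Rle_trans.
  { apply (tnorm_tri b); [exact Hb | apply (E1_tangent a b c va vb) | apply (E2_tangent a b c va vb)]; auto. }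
  assert (tnorm (E2 a b c va vb) = tnorm (F a b c va vb)) by (unfold tnorm; rewrite (E2_norm a b c va vb); auto).
  unfold F in H. rewrite H. lra.
Qed.
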